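(* If $X$ is a discrete topological space, then $\mathrm{MG}(X)$ consists exactly of the cardinal $1$ together with all regular cardinals.
   Context: A linearly ordered Abelian group is an Abelian group with a linear order compatible with addition. For $x,y\in G_{>0}$, $x\asymp y$ iff $y\le nx$ and $x\le my$ for some $n,m\in\mathbb{Z}_{\ge1}$; $\mathrm{Arc}(G)=G_{>0}/\asymp$, ordered by $[x]\preceq[y]$ iff ($nx<y$ for all $n$) or $x\asymp y$; $\mathrm{Arc}(G)^\perp$ is $\mathrm{Arc}(G)$ with a new least element adjoined. For a bottomed linearly ordered set $S$ (least element $\perp_S$, $S^*=S\setminus\{\perp_S\}$), $\chi(S)$ is the least cardinal $\kappa>0$ such that some strictly decreasing family $(s_\alpha)_{\alpha<\kappa}$ in $S^*$ has every $t\in S^*$ bounded below by some $s_\alpha$. A $G$-metric on $X$: $d\colon X^2\to G$ with $d(x,y)=0\iff x=y$, $d\ge0$, symmetric, triangle inequality; $\mathrm{Met}(X;G)$ is the set of $G$-metrics generating the topology of $X$ via open balls of radii in $G_{>0}$. $\kappa\in\mathrm{MG}(X)$ iff some linearly ordered Abelian group $G$ with $\chi(\mathrm{Arc}(G)^\perp)=\kappa$ has $\mathrm{Met}(X;G)\ne\emptyset$. *)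

(* Defs.v *)
From HB Require Import structures.
From mathcomp Require Import all_boot all_order all_algebra.
From mathcomp Require Import all_classical all_reals topology.
Set Implicit Arguments.
Unset Strict Implicit.
Unset Printing Implicit Defensive.

Definition is_wellorder (I : Type) (lt : I -> I -> Prop) : Prop :=
  (forall a, ~ lt a a) /\
  (forall a b c, lt a b -> lt b c -> lt a c) /\
  (forall a b, lt a b \/ a = b \/ lt b a) /\
  well_founded lt.

Definition card_le (I J : Type) : Prop := exists f : I -> J, injective f.

(* (I, lt) is a cardinal: an initial ordinal, i.e. a well-order not
   injectable into any of its proper initial segments *)
Definition is_cardinal (I : Type) (lt : I -> I -> Prop) : Prop :=
  is_wellorder lt /\ forall x : I, ~ card_le I {y : I | lt y x}.

Definition card_is_one (I : Type) : Prop := exists x : I, forall y : I, y = x.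

Definition is_regular (I : Type) (lt : I -> I -> Prop) : Prop :=
  is_cardinal lt /\
  (exists f : nat -> I, injective f) /\
  forall A : I -> Prop,
    (forall a : I, exists2 b : I, A b & ~ lt b a) ->
    card_le I {x : I | A x}.

Definition is_bottomed_lo (S : Type) (le : S -> S -> Prop) (bot : S) : Prop :=
  (forall a, le a a) /\
  (forall a b, le a b -> le b a -> a = b) /\
  (forall a b c, le a b -> le b c -> le a c) /\
  (forall a b, le a b \/ le b a) /\
  (forall a, le bot a).

Definition coinitial_family (S : Type) (le : S -> S -> Prop) (bot : S)
    (I : Type) (ltI : I -> I -> Prop) : Prop :=
  exists s : I -> S,
    (forall a, s a <> bot) /\
    (forall a b, ltI a b -> le (s b) (s a) /\ s b <> s a) /\
    (forall t, t <> bot -> exists a, le (s a) t).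

Definition chi_is (S : Type) (le : S -> S -> Prop) (bot : S)
    (I : Type) (ltI : I -> I -> Prop) : Prop :=
  is_cardinal ltI /\ inhabited I /\ coinitial_family le bot ltI /\
  forall (J : Type) (ltJ : J -> J -> Prop),
    is_cardinal ltJ -> inhabited J -> coinitial_family le bot ltJ ->
    card_le I J.

Definition is_loag (G : Type) (z : G) (add : G -> G -> G) (opp : G -> G)
    (le : G -> G -> Prop) : Prop :=
  (forall x y w, add x (add y w) = add (add x y) w) /\
  (forall x y, add x y = add y x) /\
  (forall x, add z x = x) /\
  (forall x, add (opp x) x = z) /\
  (forall x, le x x) /\
  (forall x y, le x y -> le y x -> x = y) /\
  (forall x y w, le x y -> le y w -> le x w) /\
  (forall x y, le x y \/ le y x) /\
  (forall x y w, le x y -> le (add x w) (add y w)).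

Section LOAG.
Variables (G : Type) (z : G) (add : G -> G -> G) (le : G -> G -> Prop).

Definition glt (x y : G) : Prop := le x y /\ x <> y.
Definition gpos (x : G) : Prop := glt z x.

Fixpoint nmul (n : nat) (x : G) : G :=
  match n with O => z | S m => add x (nmul m x) end.

Definition asymp (x y : G) : Prop :=
  exists n m : nat, (1 <= n)%N /\ (1 <= m)%N /\ le y (nmul n x) /\ le x (nmul m y).

(* Arc(G) = G_{>0} / asymp, its elements are the equivalence classes *)
Definition Arc : Type :=
  {A : G -> Prop | exists x, gpos x /\ A = (fun y => gpos y /\ asymp x y)}.

Definition arc_le (a b : Arc) : Prop :=
  exists x y, proj1_sig a x /\ proj1_sig b y /\
    ((forall n : nat, glt (nmul n x) y) \/ asymp x y).

Definition ArcPerp : Type := option Arc.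
Definition arcperp_le (a b : ArcPerp) : Prop :=
  match a, b with
  | None, _ => True
  | Some _, None => False
  | Some a', Some b' => arc_le a' b'
  end.
End LOAG.

Definition is_Gmetric (X G : Type) (z : G) (add : G -> G -> G)
    (le : G -> G -> Prop) (d : X -> X -> G) : Prop :=
  (forall x y, d x y = z <-> x = y) /\
  (forall x y, le z (d x y)) /\
  (forall x y, d x y = d y x) /\
  (forall x y w, le (d x w) (add (d x y) (d y w))).

Definition in_Met (X : topologicalType) (G : Type) (z : G)
    (add : G -> G -> G) (le : G -> G -> Prop) (d : X -> X -> G) : Prop :=
  is_Gmetric z add le d /\
  forall U : set X, open U <->
    (forall x, U x -> exists r, gpos z le r /\
        (forall y, glt le (d x y) r -> U y)).

Definition in_MG (X : topologicalType) (I : Type) (ltI : I -> I -> Prop) : Prop :=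
  exists (G : Type) (z : G) (add : G -> G -> G) (opp : G -> G)
         (le : G -> G -> Prop),
    is_loag z add opp le /\
    chi_is (@arcperp_le G z add le) None ltI /\
    exists d : X -> X -> G, in_Met z add le d.

(* Main.v *)
Require Import Defs.
From mathcomp Require Import all_boot all_order all_algebra.
From mathcomp Require Import all_classical all_reals topology.
From Stdlib Require Import Wellfounded.Inverse_Image.
Import Defs.
Set Implicit Arguments.
Unset Strict Implicit.
Unset Printing Implicit Defensive.

Lemma em (P : Prop) : P \/ ~ P.
Proof. by case: (pselect P); [left|right]. Qed.

Definition myeps (A : Type) (a0 : A) (P : A -> Prop) : A :=
  match pselect (exists x, P x) with
  | left h => proj1_sig (cid h)
  | right _ => a0 end.

Lemma myepsP (A : Type) (a0 : A) (P : A -> Prop) : (exists x, P x) -> P (myeps a0 P).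
Proof.
move=> h; rewrite /myeps; case: pselect => [h'|//].
exact: (proj2_sig (cid h')).
Qed.

Lemma sig_eq (A : Type) (P : A -> Prop) (a b : {x | P x}) :
  proj1_sig a = proj1_sig b -> a = b.
Proof.
case: a => x px; case: b => y py /= exy; subst y.
by rewrite (Prop_irrelevance px py).
Qed.

Lemma card_le_trans (A B C : Type) : card_le A B -> card_le B C -> card_le A C.
Proof.
case=> f finj [g ginj]; exists (fun x => g (f x)) => x y /ginj /finj //.
Qed.

Section WO.
Variables (I : Type) (ltI : I -> I -> Prop) (hW : is_wellorder ltI).

Lemma wo_irr a : ~ ltI a a. Proof. by case: hW. Qed.
Lemma wo_trans a b c : ltI a b -> ltI b c -> ltI a c.
Proof. case: hW => _ [h _]; exact: h. Qed.
Lemma wo_tri a b : ltI a b \/ a = b \/ ltI b a.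
Proof. by case: hW => _ [_ [h _]]. Qed.
Lemma wo_wf : well_founded ltI. Proof. by case: hW => _ [_ [_ h]]. Qed.

Lemma wo_min (Y : I -> Prop) y : Y y ->
  exists y0, Y y0 /\ forall y', ltI y' y0 -> ~ Y y'.
Proof.
move: y; apply: (well_founded_ind wo_wf (fun y => Y y -> _)) => y IH Yy.
case: (em (exists y', ltI y' y /\ Y y')) => [[y' [lt Yy']]|N].
- exact: IH lt Yy'.
- exists y; split => // y' lt Yy'; apply: N; by exists y'.
Qed.
End WO.

Definition subrel (I:Type) (R:I->Prop) (lt : I->I->Prop) (a b : {x | R x}) := lt (proj1_sig a) (proj1_sig b).
Section Chi.
Variables (S : Type) (le : S -> S -> Prop) (bot : S).
Hypothesis le_tr : forall a b c, le a b -> le b c -> le a c.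
Hypothesis le_total : forall a b, le a b \/ le b a.
Variables (I : Type) (ltI : I -> I -> Prop) (hW : is_wellorder ltI).

Definition fam (P : I -> Prop) (f : I -> S) : Prop :=
  (forall a, P a -> f a <> bot) /\
  (forall a b, P a -> P b -> ltI a b -> le (f b) (f a) /\ f b <> f a) /\
  (forall t, t <> bot -> exists a, P a /\ le (f a) t) /\
  (exists t, t <> bot).

Definition concl (P : I -> Prop) : Prop :=
  exists (J : Type) (ltJ : J -> J -> Prop), is_cardinal ltJ /\ inhabited J /\
     coinitial_family le bot ltJ /\ card_le J {x | P x}.

Lemma concl_mono R P : concl R -> card_le {x | R x} {x | P x} -> concl P.
Proof.
case=> J [ltJ [h1 [h2 [h3 h4]]]] h5; exists J, ltJ; do 3!split => //.
exact: card_le_trans h4 h5.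
Qed.

Lemma step0 P f (Q : I -> Prop) (i : {x | P x} -> I) :
  fam P f -> injective i -> (forall p, Q (i p)) ->
  exists R f', fam R f' /\ (forall y, R y -> Q y) /\ card_le {x | R x} {x | P x}.
Proof.
move=> [f1 [f2 [f3 [t0 t0b]]]] iinj iQ.
have [a0 [Pa0 _]] := f3 _ t0b.
pose p0 : {x | P x} := exist _ a0 Pa0.
pose pre y := myeps p0 (fun p => i p = y).
have preS y : (exists p, i p = y) -> i (pre y) = y.
  by move=> h; apply: (myepsP p0 h).
have preK p : pre (i p) = p by apply: (iinj (pre (i p)) p); apply: preS; exists p.
pose f' y := f (proj1_sig (pre y)).
have f'K p : f' (i p) = f (proj1_sig p) by rewrite /f' preK.
pose Img y := exists p, i p = y.
pose R y := Img y /\ forall y', Img y' -> ltI y' y -> le (f' y) (f' y') /\ f' y <> f' y'.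
exists R, f'; split; [|split].
- split; [|split; [|split]].
  + move=> a [[p <-] _]; rewrite f'K; apply: f1; exact: proj2_sig p.
  + move=> a b Ra [_ Rb] ab; exact: Rb _ Ra.1 ab.
  + move=> t tb; have [a [Pa hat]] := f3 _ tb.
    pose Y y := Img y /\ le (f' y) t.
    have Y0 : Y (i (exist _ a Pa)) by split; [exists (exist _ a Pa)| rewrite f'K].
    have [y0 [[Iy0 ley0] miny0]] := wo_min hW Y0.
    exists y0; split => //; split => // y' Iy' lt.
    have nY := miny0 _ lt.
    case: (le_total (f' y0) (f' y')) => h.
    * split => // e; apply: nY; split => //; by rewrite -e.
    * by case: nY; split => //; apply: le_tr h ley0.
  + by exists t0.
- by move=> y [[p <-] _].
- exists (fun r => pre (proj1_sig r)) => r1 r2 e; apply: sig_eq.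
  move: (proj2_sig r1) (proj2_sig r2) e => [I1 _] [I2 _] e.
  have h1 := preS _ I1; have h2 := preS _ I2.
  by rewrite /= -h1 -h2 e.
Qed.

Lemma step1 R f' : fam R f' ->
  concl R \/ exists r0, R r0 /\ card_le {x | R x} {y | ltI y r0}.
Proof.
move=> [f1 [f2 [f3 [t0 t0b]]]].
case: (em (exists x : {x | R x}, card_le {x | R x} {y | subrel ltI y x})) => [[x [g ginj]]|N].
- right; exists (proj1_sig x); split; first exact: proj2_sig x.
  exists (fun r => exist (fun y => ltI y (proj1_sig x)) (proj1_sig (proj1_sig (g r))) (proj2_sig (g r))).
  move=> r1 r2 e; apply: ginj; apply: sig_eq; apply: sig_eq.
  exact: (f_equal (@proj1_sig _ _) e).
- left; exists {x | R x}, (subrel ltI); split; [split|split; [|split]].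
  + rewrite /subrel; split; [move=> a; exact: (@wo_irr _ _ hW (proj1_sig a))|split; [move=> a b c; exact: (@wo_trans _ _ hW (proj1_sig a) (proj1_sig b) (proj1_sig c))|split]].
    * move=> a b; case: (wo_tri hW (proj1_sig a) (proj1_sig b)) => [h|[h|h]].
      by left. by right; left; apply: sig_eq. by right; right.
    * exact: (wf_inverse_image _ _ _ _ (wo_wf hW)).
  + move=> x hx; apply: N; by exists x.
  + have [a [Ra _]] := f3 _ t0b; exact: inhabits (exist _ a Ra).
  + exists (fun a => f' (proj1_sig a)); split; [|split].
    * move=> a; apply: f1; exact: proj2_sig a.
    * move=> a b; apply: f2; [exact: proj2_sig a|exact: proj2_sig b].
    * move=> t /f3 [a [Ra h]]; by exists (exist _ a Ra).
  + by exists id.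
Qed.

Lemma stepQ x : forall P f, fam P f -> card_le {y | P y} {y | ltI y x} -> concl P.
Proof.
apply: (well_founded_ind (wo_wf hW) (fun x => forall P f, fam P f -> card_le {y | P y} {y | ltI y x} -> concl P)) => {}x IH P f fP [j jinj].
have [R [f' [fR [subR cRP]]]] := step0 (Q := fun y => ltI y x)
   (i := fun p => proj1_sig (j p)) fP
   (fun p q e => jinj _ _ (sig_eq e)) (fun p => proj2_sig (j p)).
case: (step1 fR) => [cR|[r0 [Rr0 c0]]].
- exact: concl_mono cR cRP.
- exact: concl_mono (IH r0 (subR _ Rr0) R f' fR c0) cRP.
Qed.

Lemma main P f : fam P f -> concl P.
Proof.
move=> fP; case: (step1 fP) => [//|[r0 [_ c0]]]; exact: (stepQ fP c0).
Qed.

Lemma unit_card : is_cardinal (fun _ _ : unit => False).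
Proof.
split; [split; [by move=> ?|split; [by move=> ? ? ?|split]]|].
- by case; case; right; left.
- by move=> a; constructor => y [].
- by move=> x [g _]; case: (g tt).
Qed.

Lemma chi_dir : chi_is le bot ltI -> card_is_one I \/ is_regular ltI.
Proof.
case=> hC [[i0] [[s [sb [sdec scof]]] hmin]].
case: (em (exists M, forall a, ~ ltI M a)) => [[M hM]|noM].
- left; have: card_le I unit.
    apply: (hmin _ (fun _ _ => False) unit_card (inhabits tt)).
    exists (fun _ => s M); split; [by []|split; [by []|]].
    move=> t /scof [a ha]; exists tt.
    case: (wo_tri hW a M) => [lt|[<-|lt]] //.
    + exact: le_tr (sdec _ _ lt).1 ha.
    + by case: (hM _ lt).
  case=> g ginj; exists i0 => y; apply: ginj; by case: (g y); case: (g i0).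
- right; split => //; split.
  + have nx M : exists a, ltI M a.
      case: (em (exists a, ltI M a)) => // h; case: noM; exists M => a ha; apply: h; by exists a.
    pose nxt M := myeps i0 (fun a => ltI M a).
    have nxtP M : ltI M (nxt M) by apply: myepsP.
    pose f n := iter n nxt i0.
    have inc n m : (n < m)%N -> ltI (f n) (f m).
      elim: m => // m IHm; rewrite ltnS leq_eqVlt => /orP [/eqP ->|lt].
      * exact: nxtP.
      * exact: (wo_trans hW (IHm lt) (nxtP (f m))).
    exists f => n m e; case: (ltngtP n m) => // lt.
    * by have := inc _ _ lt; rewrite e => /(wo_irr hW).
    * by have := inc _ _ lt; rewrite e => /(wo_irr hW).
  + move=> A hA.
    have fA : fam A s.
      split; [by move=> a _; apply: sb|split; [by move=> a b _ _; apply: sdec|split]].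
      * move=> t /scof [a ha]; have [b Ab nba] := hA a; exists b; split => //.
        case: (wo_tri hW a b) => [lt|[e|lt]].
        - exact: le_tr (sdec _ _ lt).1 ha.
        - by rewrite -e.
        - by case: nba.
      * by exists (s i0).
    have [J [ltJ [cJ [iJ [fJ cardJ]]]]] := main fA.
    exact: card_le_trans (hmin J ltJ cJ iJ fJ) cardJ.
Qed.
End Chi.
Section LO.
Variables (G : Type) (z : G) (add : G -> G -> G) (opp : G -> G) (le : G -> G -> Prop).
Hypothesis H : is_loag z add opp le.

Lemma gA x y w : add x (add y w) = add (add x y) w. Proof. case: H => h _; exact: h. Qed.
Lemma gC x y : add x y = add y x. Proof. case: H => _ [h _]; exact: h. Qed.
Lemma g0 x : add z x = x. Proof. case: H => _ [_ [h _]]; exact: h. Qed.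
Lemma gN x : add (opp x) x = z. Proof. case: H => _ [_ [_ [h _]]]; exact: h. Qed.
Lemma lrefl x : le x x. Proof. case: H => _ [_ [_ [_ [h _]]]]; exact: h. Qed.
Lemma lanti x y : le x y -> le y x -> x = y. Proof. case: H => _ [_ [_ [_ [_ [h _]]]]]; exact: h. Qed.
Lemma ltr x y w : le x y -> le y w -> le x w. Proof. case: H => _ [_ [_ [_ [_ [_ [h _]]]]]]; exact: h. Qed.
Lemma ltot x y : le x y \/ le y x. Proof. case: H => _ [_ [_ [_ [_ [_ [_ [h _]]]]]]]; exact: h. Qed.
Lemma ladd x y w : le x y -> le (add x w) (add y w). Proof. case: H => _ [_ [_ [_ [_ [_ [_ [_ h]]]]]]]; exact: h. Qed.
Lemma g0r x : add x z = x. Proof. by rewrite gC g0. Qed.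
Lemma ladd2 a b c d : le a b -> le c d -> le (add a c) (add b d).
Proof.
move=> h1 h2; apply: ltr (ladd c h1) _; rewrite (gC b c) (gC b d); exact: ladd.
Qed.

Notation N := (nmul z add).

Lemma nmul1 x : N 1 x = x. Proof. by rewrite /= g0r. Qed.
Lemma nmul_le n x y : le x y -> le (N n x) (N n y).
Proof. move=> h; elim: n => [|n IH] /=; [exact: lrefl|exact: ladd2]. Qed.
Lemma nmulD n m x : N (n + m) x = add (N n x) (N m x).
Proof. elim: n => [|n IH] /=; first by rewrite g0. by rewrite IH gA. Qed.
Lemma nmulM n m x : N (n * m) x = N n (N m x).
Proof. elim: n => [|n IH]; first by rewrite mul0n. by rewrite mulSn nmulD IH. Qed.

Lemma R_to x y : (forall n, glt le (N n x) y) \/ asymp z add le x y ->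
  exists m, (1 <= m)%N /\ le x (N m y).
Proof.
case=> [h|[n [m [_ [hm [_ h]]]]]]; last by exists m.
exists 1%N; split => //; rewrite nmul1; have := (h 1%N).1; by rewrite nmul1.
Qed.

Lemma to_R x y : gpos z le y -> (exists m, (1 <= m)%N /\ le x (N m y)) ->
  (forall n, glt le (N n x) y) \/ asymp z add le x y.
Proof.
move=> [py ny] [m [hm hx]].
case: (em (forall n, glt le (N n x) y)) => [h|h]; [by left|right].
have [n hn] : exists n, ~ glt le (N n x) y.
  case: (em (exists n, ~ glt le (N n x) y)) => // h'; case: h => n.
  case: (em (glt le (N n x) y)) => // h2; case: h'; by exists n.
have hle : le y (N n x).
  case: (ltot y (N n x)) => // h2; case: (em (N n x = y)) => [<-|h3]; first exact: lrefl.
  by case: hn.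
exists n, m; do 3?split => //.
case: n hn hle => [|n] // _ /= h0; case: ny; exact: lanti.
Qed.

Lemma class_mem (a : Arc z add le) : exists x, proj1_sig a x /\ gpos z le x.
Proof.
case: a => A [x [hx eA]] /=; rewrite eA; exists x; split => //; split => //.
exists 1%N, 1%N; rewrite nmul1; do 3!split => //; exact: lrefl.
Qed.

Lemma class_pos (a : Arc z add le) y : proj1_sig a y -> gpos z le y.
Proof. by case: a => A [x [hx eA]] /=; rewrite eA => -[]. Qed.

Lemma class_same (a : Arc z add le) y y' : proj1_sig a y -> proj1_sig a y' ->
  exists k, (1 <= k)%N /\ le y (N k y').
Proof.
case: a => A [x [hx eA]] /=; rewrite eA => -[_ [n [m [hn [hm [h1 h2]]]]]] [_ [n' [m' [hn' [hm' [h1' h2']]]]]].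
exists (n * m')%N; split; first by rewrite muln_gt0 hn hm'.
rewrite nmulM; apply: ltr h1 _; exact: nmul_le.
Qed.

Lemma arc_char (a b : Arc z add le) : arc_le a b <->
  exists x y, proj1_sig a x /\ proj1_sig b y /\ exists m, (1 <= m)%N /\ le x (N m y).
Proof.
split.
- move=> [x [y [ax [bY h]]]]; exists x, y; do 2!split => //; exact: R_to.
- move=> [x [y [ax [bY h]]]]; exists x, y; do 2!split => //.
  apply: to_R => //; exact: class_pos bY.
Qed.

Lemma arc_trans (a b c : Arc z add le) : arc_le a b -> arc_le b c -> arc_le a c.
Proof.
move=> /arc_char [x [y [ax [bY [m [hm h]]]]]] /arc_char [y' [w [bY' [cw [k [hk h']]]]]].
apply/arc_char; exists x, w; do 2!split => //.
have [l [hl hyy]] := class_same bY bY'.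
exists (m * (l * k))%N; split; first by rewrite !muln_gt0 hm hl hk.
rewrite !nmulM; apply: ltr h _; apply: nmul_le; apply: ltr hyy _; exact: nmul_le.
Qed.

Lemma arc_total (a b : Arc z add le) : arc_le a b \/ arc_le b a.
Proof.
have [x [ax px]] := class_mem a; have [y [bY py]] := class_mem b.
case: (ltot x y) => h; [left|right]; apply/arc_char.
- exists x, y; do 2!split => //; exists 1%N; by rewrite nmul1.
- exists y, x; do 2!split => //; exists 1%N; by rewrite nmul1.
Qed.

Lemma ap_trans (a b c : ArcPerp z add le) :
  arcperp_le a b -> arcperp_le b c -> arcperp_le a c.
Proof.
case: a => [a|] //; case: b => [b|] //; case: c => [c|] //=; exact: arc_trans.
Qed.

Lemma ap_total (a b : ArcPerp z add le) : arcperp_le a b \/ arcperp_le b a.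
Proof.
case: a => [a|]; case: b => [b|] /=; try by [left|right].
exact: arc_total.
Qed.

End LO.

Import Order.TTheory GRing.Theory Num.Theory.

Section Reg.
Variables (I : Type) (ltI : I -> I -> Prop) (hW : is_wellorder ltI).

Definition Gz : I -> int := fun _ => 0%R.
Definition Gadd (f g : I -> int) : I -> int := fun b => (f b + g b)%R.
Definition Gopp (f : I -> int) : I -> int := fun b => (- f b)%R.
Definition Gle (f g : I -> int) : Prop :=
  f = g \/ exists a, (f a < g a)%R /\ forall b, ltI b a -> f b = g b.

Lemma Gloag : is_loag Gz Gadd Gopp Gle.
Proof.
split; [|split; [|split; [|split; [|split; [|split; [|split; [|split]]]]]]].
- by move=> x y w; apply: funext => b; rewrite /Gadd addrA.
- by move=> x y; apply: funext => b; rewrite /Gadd addrC.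
- by move=> x; apply: funext => b; rewrite /Gadd /Gz add0r.
- by move=> x; apply: funext => b; rewrite /Gadd /Gopp /Gz addNr.
- by move=> x; left.
- move=> x y [->|[a [ha ea]]] // [e|[a' [ha' ea']]]; first by [].
  case: (wo_tri hW a a') => [lt|[e|lt]].
  + by move: ha; rewrite (ea' _ lt) ltxx.
  + by subst a'; move: (lt_trans ha ha'); rewrite ltxx.
  + by move: ha'; rewrite (ea _ lt) ltxx.
- move=> x y w [->|[a [ha ea]]] // [<-|[a' [ha' ea']]]; first by right; exists a.
  right; case: (wo_tri hW a a') => [lt|[e|lt]].
  + exists a; split; first by rewrite -(ea' _ lt).
    move=> b hb; rewrite (ea _ hb); exact: (ea' b (wo_trans hW hb lt)).
  + subst a'; exists a; split; first exact: lt_trans ha ha'.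
    by move=> b hb; rewrite (ea _ hb) (ea' _ hb).
  + exists a'; split; first by rewrite (ea _ lt).
    move=> b hb; rewrite (ea b (wo_trans hW hb lt)); exact: (ea' _ hb).
- move=> x y; case: (em (x = y)) => [->|ne]; first by left; left.
  have [b hb] : exists b, x b <> y b.
    case: (em (exists b, x b <> y b)) => // h; case: ne; apply: funext => b.
    case: (em (x b = y b)) => // h'; case: h; by exists b.
  have [a [ha mina]] := wo_min hW (Y := fun b => x b <> y b) hb.
  have eqb c : ltI c a -> x c = y c.
    move=> hc; case: (em (x c = y c)) => // h'; by case: (mina _ hc).
  case: (ltgtP (x a) (y a)) => [h|h|h]; last by [].
  + left; right; exists a; split => // c hc; exact: eqb.
  + right; right; exists a; split => // c hc; by rewrite eqb.
- move=> x y w [->|[a [ha ea]]]; first by left.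
  right; exists a; split; first by rewrite /Gadd ltrD2r.
  by move=> b hb; rewrite /Gadd ea.
Qed.

Definition lead (g : I -> int) a := (0 < g a)%R /\ forall b, ltI b a -> g b = 0%R.

Lemma pos_lead g : gpos Gz Gle g -> exists a, lead g a.
Proof.
move=> [[e|[a [ha ea]]] ne]; first by [].
exists a; split => // b hb; by rewrite -ea.
Qed.

Lemma lead_pos g a : lead g a -> gpos Gz Gle g.
Proof.
move=> [ha ea]; split; first by right; exists a; split => // b hb; rewrite ea.
move=> e; move: ha; by rewrite -e ltxx.
Qed.

Lemma lead_uniq g a c : lead g a -> lead g c -> a = c.
Proof.
move=> [ha ea] [hc ec]; case: (wo_tri hW a c) => [lt|[//|lt]].
- by move: ha; rewrite ec // ltxx.
- by move: hc; rewrite ea // ltxx.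
Qed.

Lemma lead_le u w a c : Gle u w -> lead u a -> lead w c -> ~ ltI a c.
Proof.
move=> [e|[d [hd ed]]] hu hw lt.
- subst w; have e := lead_uniq hu hw; subst c; exact: (wo_irr hW lt).
- case: hu => [ua eua]; case: hw => [wc ewc].
  case: (wo_tri hW d a) => [lt'|[e|lt']].
  + move: hd; rewrite (eua d lt') (ewc d (wo_trans hW lt' lt)); by rewrite ltxx.
  + subst d; move: hd; rewrite (ewc a lt) => hd.
    by have := lt_trans ua hd; rewrite ltxx.
  + move: ua; rewrite (ed a lt') (ewc a lt); by rewrite ltxx.
Qed.

Lemma nmulF n g : nmul Gz Gadd n g = fun b => (g b *+ n)%R.
Proof.
elim: n => [|n IH] /=; first by apply: funext => b; rewrite mulr0n.
by rewrite IH; apply: funext => b; rewrite /Gadd mulrS.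
Qed.

Lemma lead_nmul m g a : (1 <= m)%N -> lead g a -> lead (nmul Gz Gadd m g) a.
Proof.
move=> hm [ha ea]; rewrite nmulF; split; first by rewrite pmulrn_lgt0.
by move=> b hb; rewrite ea // mul0rn.
Qed.

Lemma lead_asymp x y a c : asymp Gz Gadd Gle x y -> lead x a -> lead y c -> a = c.
Proof.
move=> [n [m [hn [hm [h1 h2]]]]] hx hy.
have c_a := lead_le h1 hy (lead_nmul hn hx).
have a_c := lead_le h2 hx (lead_nmul hm hy).
by case: (wo_tri hW a c) => [//|[//|//]].
Qed.

Definition ee (al : I) : I -> int := fun b => if pselect (b = al) then 1%R else 0%R.

Lemma ee_eq al : ee al al = 1%R.
Proof. by rewrite /ee; case: pselect. Qed.
Lemma ee_ne al b : b <> al -> ee al b = 0%R.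
Proof. by rewrite /ee; case: pselect. Qed.

Lemma lead_ee al : lead (ee al) al.
Proof.
split; first by rewrite ee_eq.
move=> b hb; apply: ee_ne => e; subst b; exact: (wo_irr hW hb).
Qed.

Lemma ee_lt al be : ltI al be -> forall n, glt Gle (nmul Gz Gadd n (ee be)) (ee al).
Proof.
move=> lt n; rewrite nmulF; split.
- right; exists al; split.
  + rewrite ee_eq ee_ne ?mul0rn //; move=> e; subst be; exact: (wo_irr hW lt).
  + move=> b hb; rewrite !ee_ne ?mul0rn //.
    * move=> e; subst b; exact: (wo_irr hW hb).
    * move=> e; subst b; exact: (wo_irr hW (wo_trans hW hb lt)).
- move=> e; have := f_equal (fun f => f al) e; rewrite /= ee_eq ee_ne ?mul0rn //.
  move=> e'; subst be; exact: (wo_irr hW lt).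
Qed.

Lemma ee_ll x a al : lead x a -> ltI a al -> forall n, glt Gle (nmul Gz Gadd n (ee al)) x.
Proof.
move=> [xa ex] lt n; rewrite nmulF; split.
- right; exists a; split.
  + rewrite ee_ne ?mul0rn // => e; subst a; exact: (wo_irr hW lt).
  + move=> b hb; rewrite ee_ne ?mul0rn ?ex //.
    move=> e; subst b; exact: (wo_irr hW (wo_trans hW hb lt)).
- move=> e; have := f_equal (fun f => f a) e; rewrite /= ee_ne ?mul0rn.
  + by move=> e'; move: xa; rewrite -e' ltxx.
  + move=> e'; subst a; exact: (wo_irr hW lt).
Qed.

End Reg.

Section Met.
Variables (X : topologicalType) (hX : forall A : set X, open A).
Variables (G : Type) (z : G) (add : G -> G -> G) (opp : G -> G) (le : G -> G -> Prop).
Hypothesis H : is_loag z add opp le.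
Variable p : G.
Hypothesis hp : gpos z le p.

Definition dd (x y : X) : G := if pselect (x = y) then z else p.
Lemma dd_eq x : dd x x = z. Proof. by rewrite /dd; case: pselect. Qed.
Lemma dd_ne x y : x <> y -> dd x y = p. Proof. by rewrite /dd; case: pselect. Qed.

Lemma dd_nn x y : le z (dd x y).
Proof.
case: (em (x = y)) => [<-|ne]; first by rewrite dd_eq; exact: (lrefl H).
rewrite dd_ne //; exact: hp.1.
Qed.

Lemma met_disc : exists d : X -> X -> G, in_Met z add le d.
Proof.
have [pz pne] := hp.
exists dd; split; [split; [|split; [|split]]|].
- move=> x y; split.
  + case: (em (x = y)) => // ne; rewrite dd_ne // => e; by case: pne.
  + by move=> <-; rewrite dd_eq.
- exact: dd_nn.
- move=> x y; case: (em (x = y)) => [<-//|ne].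
  by rewrite !dd_ne // => e; apply: ne.
- move=> x y w; case: (em (x = w)) => [<-|nxw].
  + rewrite dd_eq; apply: (ltr H) (ladd2 H (dd_nn x y) (dd_nn y x)); by rewrite (g0 H); exact: (lrefl H).
  + rewrite (dd_ne nxw); case: (em (x = y)) => [<-|nxy].
    * rewrite dd_eq (g0 H) dd_ne //; exact: (lrefl H).
    * rewrite (dd_ne nxy); have := ladd2 H (lrefl H p) (dd_nn y w).
      by rewrite (g0r H).
- move=> U; split => [_ x Ux|_]; last exact: hX.
  exists p; split => // y [_ hne]; case: (em (x = y)) => [<-//|ne].
  by case: hne; rewrite dd_ne.
Qed.
End Met.

Definition iadd (a b : int) : int := (a + b)%R.
Definition iopp (a : int) : int := (- a)%R.
Definition ile (a b : int) : Prop := (a <= b)%R.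

Lemma int_loag : is_loag 0%R iadd iopp ile.
Proof.
rewrite /iadd /iopp /ile.
split; [|split; [|split; [|split; [|split; [|split; [|split; [|split]]]]]]].
- by move=> x y w; rewrite addrA.
- by move=> x y; rewrite addrC.
- by move=> x; rewrite add0r.
- by move=> x; rewrite addNr.
- by move=> x; rewrite lexx.
- by move=> x y h1 h2; apply: le_anti; rewrite h1 h2.
- by move=> x y w h1 h2; apply: le_trans h1 h2.
- by move=> x y; case/orP: (le_total x y); [left|right].
- by move=> x y w h; rewrite lerD2r.
Qed.

Lemma nmul_int n (y : int) : nmul 0%R iadd n y = (y *+ n)%R.
Proof. elim: n => [|n IH] /=; first by rewrite mulr0n. by rewrite IH /iadd mulrS. Qed.

Lemma one_case (X : topologicalType) (hX : forall A : set X, open A)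
    (I : Type) (ltI : I -> I -> Prop) (hI : is_cardinal ltI) :
  card_is_one I -> in_MG X ltI.
Proof.
move=> [i0 hi0].
have pos1 : gpos 0%R ile 1%R by split; [rewrite /ile ler01|].
exists int, 0%R, iadd, iopp, ile; split; first exact: int_loag.
split; last exact: (met_disc hX int_loag pos1).
split => //; split; first exact: inhabits i0.
split.
- pose c1 : Arc 0%R iadd ile := exist _ (fun y => gpos 0%R ile y /\ asymp 0%R iadd ile 1%R y)
     (ex_intro _ 1%R (conj pos1 erefl)).
  exists (fun _ => Some c1); split => //; split.
  + move=> a b lt; move: lt; rewrite (hi0 a) (hi0 b) => lt; by case: (wo_irr hI.1 lt).
  + move=> [c|] // _; exists i0; rewrite /=.
    apply/(arc_char int_loag).
    have [x [c1x [px nx]]] := class_mem int_loag c1.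
    have [y [cy [py ny]]] := class_mem int_loag c.
    exists x, y; split => //; split => //; exists `|x|%N; split.
    * by rewrite absz_gt0; apply/eqP => e; apply: nx.
    * rewrite nmul_int /ile.
      have e : x = (1 *+ `|x|%N)%R by rewrite natz gez0_abs.
      rewrite {1}e lerMn2r; apply/orP; right.
      rewrite -gtz0_ge1 lt_neqAle py andbT; apply/eqP => e'; by apply: ny.
- move=> J ltJ _ [j0] _; exists (fun _ => j0) => a b _; by rewrite (hi0 a) (hi0 b).
Qed.

Lemma reg_case (X : topologicalType) (hX : forall A : set X, open A)
    (I : Type) (ltI : I -> I -> Prop) (hI : is_cardinal ltI) :
  is_regular ltI -> in_MG X ltI.
Proof.
move=> hR; have hW := hI.1; have [_ [[f finj] cof]] := hR.
have nomax a : exists b, ltI a b.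
  case: (em (exists b, ltI a b)) => // nb.
  have cA : forall a', exists2 b, b = a & ~ ltI b a'.
    move=> a'; exists a => // h; apply: nb; by exists a'.
  have [g ginj] := cof (fun b => b = a) cA.
  have e : g (f 0%N) = g (f 1%N).
    apply: sig_eq; by rewrite (proj2_sig (g (f 0%N))) (proj2_sig (g (f 1%N))).
  by have := finj _ _ (ginj _ _ e).
have H := Gloag hW.
pose cls (al : I) : Arc (Gz (I:=I)) (Gadd (I:=I)) (Gle ltI) :=
  exist _ (fun y => gpos (@Gz I) (Gle ltI) y /\ asymp (@Gz I) (@Gadd I) (Gle ltI) (ee al) y)
     (ex_intro _ (ee al) (conj (lead_pos (lead_ee hW al)) erefl)).
have mem_cls al : proj1_sig (cls al) (ee al).
  split; first exact: (lead_pos (lead_ee hW al)).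
  exists 1%N, 1%N; rewrite (nmul1 H); do 3!split => //; exact: (lrefl H).
exists (I -> int), (@Gz I), (@Gadd I), (@Gopp I), (Gle ltI); split; first exact: H.
split; last exact: (met_disc hX H (lead_pos (lead_ee hW (f 0%N)))).
split => //; split; first exact: inhabits (f 0%N).
split.
- exists (fun al => Some (cls al)); split => //; split.
  + move=> a b lt; split.
    * exists (ee b), (ee a); split; first exact: mem_cls.
      split; first exact: mem_cls.
      left; exact: (ee_lt hW lt).
    * move=> [e]; have e' := f_equal (fun P => P (ee a)) e; cbv beta in e'.
      move: (mem_cls a); rewrite /cls /= -e' => -[_ [n [m [hn [hm [h1 h2]]]]]].
      exact: (lead_le hW h1 (lead_ee hW a) (lead_nmul hn (lead_ee hW b)) lt).
  + move=> [c|] // _.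
    have [x [cx px]] := class_mem H c.
    have [a la] := pos_lead px; have [al lt] := nomax a.
    exists al; exists (ee al), x; split; first exact: mem_cls.
    split => //; left; exact: (ee_ll hW la lt).
- move=> J ltJ cJ [j0] [t [tb [tdec tcof]]].
  pose B be := exists j c x, t j = Some c /\ proj1_sig c x /\ lead ltI x be.
  have cofB : forall al, exists2 be, B be & ~ ltI be al.
    move=> al; have [al' lt] := nomax al.
    have [j hj] := tcof (Some (cls al')) (fun e => ltac:(discriminate e)).
    move: hj; case ej: (t j) => [c|]; last by case: (tb j).
    move=> /(arc_char H) [x [y [cx [cy [m [hm hxy]]]]]].
    have [be lx] := pos_lead (class_pos cx).
    case: cy => [py hasy]; have [ga ly] := pos_lead py.
    have eg := lead_asymp hW hasy (lead_ee hW al') ly; subst ga.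
    have nlt := lead_le hW hxy lx (lead_nmul hm ly).
    exists be; first by exists j, c, x.
    move=> h; apply: nlt; exact: (wo_trans hW h lt).
  have [g ginj] := cof B cofB.
  pose psi (b : {x | B x}) := myeps j0 (fun j => exists c x, t j = Some c /\ proj1_sig c x /\ lead ltI x (proj1_sig b)).
  have psiP b : exists c x, t (psi b) = Some c /\ proj1_sig c x /\ lead ltI x (proj1_sig b).
    have hP : exists j, exists c x, t j = Some c /\ proj1_sig c x /\ lead ltI x (proj1_sig b).
      by move: (proj2_sig b) => [j hj]; exists j.
    exact: (myepsP j0 hP).
  have same_lead (c : Arc (Gz (I:=I)) (Gadd (I:=I)) (Gle ltI)) x1 x2 b1 b2 :
      proj1_sig c x1 -> proj1_sig c x2 -> lead ltI x1 b1 -> lead ltI x2 b2 -> b1 = b2.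
    case: c => A [xc [hxc eA]] /=; rewrite eA => -[_ as1] [_ as2] l1 l2.
    have [a la] := pos_lead hxc.
    by rewrite -(lead_asymp hW as1 la l1) (lead_asymp hW as2 la l2).
  exists (fun i => psi (g i)) => i1 i2 e; apply: ginj; apply: sig_eq.
  have [c1 [x1 [e1 [c1x l1]]]] := psiP (g i1).
  have [c2 [x2 [e2 [c2x l2]]]] := psiP (g i2).
  rewrite e e2 in e1; case: e1 => ec; subst c2.
  exact: (same_lead c1 _ _ _ _ c1x c2x l1 l2).
Qed.

Theorem proposition2p50 (X : topologicalType)
    (hX : forall A : set X, open A)
    (I : Type) (ltI : I -> I -> Prop) (hI : is_cardinal ltI) :
  in_MG X ltI <-> (card_is_one I \/ is_regular ltI).
Proof.
split.
- move=> [G [z [add [opp [le [H [hchi _]]]]]]].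
  exact: (chi_dir (ap_trans H) (ap_total H) hI.1 hchi).
- case=> h; [exact: one_case|exact: reg_case].
Qed.
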